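(* Let $(X,d)$ be a compact metric space with $\mathrm{diam}(X)\le1$. For $A\in\bar J(X)$ define $g_X(A)\colon C(X)\to\mathbb R$ by $g_X(A)(\varphi)=\sup\{\varphi(x)+\ln t\mid (x,t)\in A\}$ (with $\ln 0=-\infty$). Then $g_X(A)\in I(X)$ for each $A$, and $g_X\colon\bar J(X)\to I(X)$ is a homeomorphism.
   Context: A max-plus (idempotent) measure on a compact Hausdorff space $X$ is a functional $\mu\colon C(X)\to\mathbb R$ such that $\mu(c_X)=c$ for every constant $c\in\mathbb R$, $\mu(\varphi\vee\psi)=\mu(\varphi)\vee\mu(\psi)$, and $\mu(c_X+\varphi)=c+\mu(\varphi)$ for all $c\in\mathbb R$, $\varphi\in C(X)$. $I(X)$ is the set of max-plus measures with the topology of pointwise convergence on $C(X)$. $\mathrm{Cone}(X)=(X\times[0,1])/(X\times\{0\})$ with metric $\check d((x,s),(y,t))=\min\{s,t\}d(x,y)+|s-t|$; $\exp$ of a metric space is the space of nonempty compact subsets with the Hausdorff metric. A subset $K\subset\mathrm{Cone}(X)$ is saturated if $(x,t)\in K$ implies $(x,t')\in K$ for all $t'\in[0,t]$. $\bar J(X)=\{A\in\exp(\mathrm{Cone}(X))\mid A \text{ saturated and }(x,1)\in A\text{ for some }x\in X\}$. *)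

(* Defs.v *)
From Stdlib Require Import Reals Lra List ClassicalEpsilon.
Open Scope R_scope.

(** * Suprema / infima of sets of reals (literal sup; junk value 0 if
    the set is empty or unbounded above). *)
Definition Rsup (E : R -> Prop) : R :=
  match excluded_middle_informative (bound E /\ exists x, E x) with
  | left H => proj1_sig (completeness E (proj1 H) (proj2 H))
  | right _ => 0
  end.

Definition Rinf (E : R -> Prop) : R := - Rsup (fun y => E (- y)).

Record is_metric {X : Type} (d : X -> X -> R) : Prop := {
  metric_nonneg : forall x y, 0 <= d x y;
  metric_refl : forall x, d x x = 0;
  metric_sep : forall x y, d x y = 0 -> x = y;
  metric_sym : forall x y, d x y = d y x;
  metric_tri : forall x y z, d x z <= d x y + d y z
}.

Definition mopen {Y : Type} (D : Y -> Y -> R) (U : Y -> Prop) : Prop :=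
  forall p, U p -> exists r, 0 < r /\ forall q, D p q < r -> U q.

Definition mcompact_set {Y : Type} (D : Y -> Y -> R) (K : Y -> Prop) : Prop :=
  forall (I : Type) (U : I -> Y -> Prop),
    (forall i, mopen D (U i)) ->
    (forall p, K p -> exists i, U i p) ->
    exists l : list I, forall p, K p -> exists i, In i l /\ U i p.

Definition mcompact_space {X : Type} (d : X -> X -> R) : Prop :=
  mcompact_set d (fun _ => True).

Definition mcont {X : Type} (d : X -> X -> R) (f : X -> R) : Prop :=
  forall x eps, 0 < eps -> exists delta, 0 < delta /\
    forall y, d x y < delta -> Rabs (f x - f y) < eps.

Definition Cfun {X : Type} (d : X -> X -> R) : Type := { f : X -> R | mcont d f }.

Definition cval {X : Type} {d : X -> X -> R} (phi : Cfun d) : X -> R := proj1_sig phi.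

Definition is_maxplus {X : Type} (d : X -> X -> R) (mu : Cfun d -> R) : Prop :=
  (forall (c : R) (phi : Cfun d), (forall x, cval phi x = c) -> mu phi = c) /\
  (forall phi psi chi : Cfun d,
      (forall x, cval chi x = Rmax (cval phi x) (cval psi x)) ->
      mu chi = Rmax (mu phi) (mu psi)) /\
  (forall (c : R) (phi chi : Cfun d),
      (forall x, cval chi x = c + cval phi x) -> mu chi = c + mu phi).

(** topology of pointwise convergence on C(X), restricted to I(X):
    V is open iff every mu in V (and in I(X)) has a basic neighbourhood
    {nu | |nu(phi_i) - mu(phi_i)| < r, i = 1..n} (within I(X)) contained in V. *)
Definition openI {X : Type} (d : X -> X -> R) (V : (Cfun d -> R) -> Prop) : Prop :=
  forall mu, is_maxplus d mu -> V mu ->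
    exists (l : list (Cfun d)) (r : R), 0 < r /\
      forall nu, is_maxplus d nu ->
        (forall phi, In phi l -> Rabs (nu phi - mu phi) < r) -> V nu.

(** * The cone Cone(X) = (X x [0,1]) / (X x {0}).
    A point is represented by a pair (x,t) with 0 <= t <= 1; the cone metric
    below is a pseudometric on X x [0,1] vanishing exactly on pairs identified
    by the quotient (i.e. (x,0) ~ (y,0)).  Subsets of Cone(X) are represented
    by their preimages, i.e. subsets of X x [0,1] which are unions of classes. *)
Definition cone_dist {X : Type} (d : X -> X -> R) (p q : X * R) : R :=
  Rmin (snd p) (snd q) * d (fst p) (fst q) + Rabs (snd p - snd q).

Definition pt_set_dist {Y : Type} (D : Y -> Y -> R) (a : Y) (B : Y -> Prop) : R :=
  Rinf (fun r => exists b, B b /\ r = D a b).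

Definition hausdorff {Y : Type} (D : Y -> Y -> R) (A B : Y -> Prop) : R :=
  Rmax (Rsup (fun r => exists a, A a /\ r = pt_set_dist D a B))
       (Rsup (fun r => exists b, B b /\ r = pt_set_dist D b A)).

Definition Jbar {X : Type} (d : X -> X -> R) (A : X * R -> Prop) : Prop :=
  (forall x t, A (x, t) -> 0 <= t <= 1) /\
  (* A is a union of classes of the quotient (represents a subset of Cone X) *)
  (forall x y, A (x, 0) -> A (y, 0)) /\
  (exists p, A p) /\
  mcompact_set (cone_dist d) A /\
  (forall x t t', A (x, t) -> 0 <= t' <= t -> A (x, t')) /\
  (exists x, A (x, 1)).

Definition openJ {X : Type} (d : X -> X -> R) (U : (X * R -> Prop) -> Prop) : Prop :=
  forall A, Jbar d A -> U A ->
    exists r, 0 < r /\ forall B, Jbar d B -> hausdorff (cone_dist d) A B < r -> U B.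

(** g_X(A)(phi) = sup { phi(x) + ln t | (x,t) in A }   (ln 0 = -oo, so only
    t > 0 contributes) *)
Definition gX {X : Type} (d : X -> X -> R) (A : X * R -> Prop) (phi : Cfun d) : R :=
  Rsup (fun r => exists x t, A (x, t) /\ 0 < t /\ r = cval phi x + ln t).

(** homeomorphism between subspaces S0 (of S) and T0 (of T), with topologies
    given by "open" predicates (openness of a subset of S relative to S0). *)
Definition homeomorphism {S T : Type}
    (S0 : S -> Prop) (openS : (S -> Prop) -> Prop)
    (T0 : T -> Prop) (openT : (T -> Prop) -> Prop) (f : S -> T) : Prop :=
  (forall a, S0 a -> T0 (f a)) /\
  (forall a b, S0 a -> S0 b -> f a = f b -> a = b) /\
  (forall y, T0 y -> exists a, S0 a /\ f a = y) /\
  (forall V, openT V -> openS (fun a => V (f a))) /\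
  (forall U, openS U -> openT (fun y => exists a, S0 a /\ U a /\ f a = y)).

(* Main.v *)
Require Import Defs.
From Stdlib Require Import Reals Lra List ClassicalEpsilon Classical FunctionalExtensionality PropExtensionality.
Open Scope R_scope.

Lemma Rsup_spec E : bound E -> (exists x, E x) -> is_lub E (Rsup E).
Proof.
  intros Hb Hn. unfold Rsup. destruct excluded_middle_informative as [H|H].
  - destruct (completeness E (proj1 H) (proj2 H)); simpl; auto.
  - exfalso; tauto.
Qed.

Lemma Rsup_upper E x : bound E -> E x -> x <= Rsup E.
Proof. intros Hb Hx. destruct (Rsup_spec E Hb (ex_intro _ x Hx)) as [H _]. apply H; auto. Qed.

Lemma Rsup_least E M : (forall x, E x -> x <= M) -> (exists x, E x) -> Rsup E <= M.
Proof. intros H Hn. assert (Hb : bound E) by (exists M; exact H).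
  destruct (Rsup_spec E Hb Hn) as [_ H2]. apply H2. exact H. Qed.

Lemma Rsup_least0 E M : (forall x, E x -> x <= M) -> 0 <= M -> Rsup E <= M.
Proof. intros H H0. destruct (classic (exists x, E x)) as [Hn|Hn].
  - apply Rsup_least; auto.
  - unfold Rsup. destruct excluded_middle_informative as [H1|H1]; [exfalso; tauto| lra]. Qed.

Lemma Rsup_gt E c : bound E -> (exists x, E x) -> c < Rsup E -> exists x, E x /\ c < x.
Proof. intros Hb Hn Hc. destruct (classic (exists x, E x /\ c < x)) as [H|H]; auto.
  exfalso. assert (Rsup E <= c). { apply Rsup_least; auto. intros x Hx.
      destruct (Rle_lt_dec x c); auto. exfalso; apply H; eauto. } lra.
Qed.

Lemma Rinf_lower S y : (exists m, forall z, S z -> m <= z) -> S y -> Rinf S <= y.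
Proof. intros [m Hm] Hy. unfold Rinf.
  assert (- y <= Rsup (fun y0 => S (- y0))).
  { apply Rsup_upper. exists (-m). intros z Hz. specialize (Hm _ Hz). lra.
    rewrite Ropp_involutive; auto. }
  lra. Qed.

Lemma Rinf_greatest S m : (forall z, S z -> m <= z) -> (exists z, S z) -> m <= Rinf S.
Proof. intros H [z Hz]. unfold Rinf.
  assert (Rsup (fun y0 => S (- y0)) <= - m).
  { apply Rsup_least. intros x Hx. specialize (H _ Hx). lra.
    exists (-z). rewrite Ropp_involutive; auto. }
  lra. Qed.

Lemma absle x y : Rabs x <= y -> - y <= x <= y.
Proof. unfold Rabs; destruct Rcase_abs; lra. Qed.
Lemma absle_intro x y : - y <= x <= y -> Rabs x <= y.
Proof. unfold Rabs; destruct Rcase_abs; lra. Qed.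
Lemma abslt_intro x y : - y < x < y -> Rabs x < y.
Proof. unfold Rabs; destruct Rcase_abs; lra. Qed.

Section Cone.
Variable X : Type.
Variable d : X -> X -> R.
Hypothesis Hm : is_metric d.
Hypothesis Hdiam : forall x y, d x y <= 1.

Notation D := (cone_dist d).

Lemma dpos x y : 0 <= d x y. Proof. apply (metric_nonneg _ Hm). Qed.
Lemma dsym x y : d x y = d y x. Proof. apply (metric_sym _ Hm). Qed.
Lemma dself x : d x x = 0. Proof. apply (metric_refl _ Hm). Qed.
Lemma dtri x y z : d x z <= d x y + d y z. Proof. apply (metric_tri _ Hm). Qed.

Lemma Rmin_cases a b : (Rmin a b = a /\ a <= b) \/ (Rmin a b = b /\ b <= a).
Proof. unfold Rmin; destruct Rle_dec; [left|right]; lra. Qed.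

Lemma D_sym p q : D p q = D q p.
Proof. destruct p as [x t], q as [y s]. unfold cone_dist; simpl.
  rewrite Rmin_comm, dsym, Rabs_minus_sym. auto. Qed.

Lemma D_self p : D p p = 0.
Proof. destruct p as [x t]. unfold cone_dist; simpl. rewrite dself. 
  replace (t - t) with 0 by ring. rewrite Rabs_R0. ring. Qed.

Lemma D_lev p q : 0 <= snd p -> 0 <= snd q -> Rabs (snd p - snd q) <= D p q.
Proof. destruct p as [x t], q as [y s]; unfold cone_dist; simpl; intros.
  assert (0 <= Rmin t s * d x y). { apply Rmult_le_pos; [|apply dpos].
   destruct (Rmin_cases t s) as [[-> _]|[-> _]]; lra. } lra. Qed.

Lemma D_nonneg p q : 0 <= snd p -> 0 <= snd q -> 0 <= D p q.
Proof. intros. pose proof (D_lev p q H H0). pose proof (Rabs_pos (snd p - snd q)). lra. Qed.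

Lemma D_tri p q r : 0 <= snd p -> 0 <= snd q -> 0 <= snd r -> D p r <= D p q + D q r.
Proof. destruct p as [x t], q as [y s], r as [z u]; unfold cone_dist; simpl; intros Ht Hs Hu.
  pose proof (dtri x y z). pose proof (dpos x y). pose proof (dpos y z). pose proof (dpos x z).
  pose proof (Hdiam x z).
  destruct (Rle_lt_dec (Rmin t u) s) as [Hle|Hlt].
  - assert (Rmin t u <= Rmin t s) by (apply Rmin_glb; [apply Rmin_l| auto]).
    assert (Rmin t u <= Rmin s u) by (apply Rmin_glb; [auto| apply Rmin_r]).
    assert (0 <= Rmin t u) by (apply Rmin_glb; auto).
    assert (Rmin t u * d x y <= Rmin t s * d x y) by (apply Rmult_le_compat_r; auto).
    assert (Rmin t u * d y z <= Rmin s u * d y z) by (apply Rmult_le_compat_r; auto).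
    assert (Rmin t u * d x z <= Rmin t u * (d x y + d y z)) by (apply Rmult_le_compat_l; auto).
    assert (Rabs (t - u) <= Rabs (t - s) + Rabs (s - u)).
    { replace (t - u) with ((t - s) + (s - u)) by ring. apply Rabs_triang. }
    nra.
  - assert (Rmin t s = s). { destruct (Rmin_cases t s) as [[-> ?]|[-> ?]]; auto.
      pose proof (Rmin_l t u); lra. }
    assert (Rmin s u = s). { destruct (Rmin_cases s u) as [[-> ?]|[-> ?]]; auto.
      pose proof (Rmin_r t u); lra. }
    rewrite H4, H5.
    assert (s < t) by (pose proof (Rmin_l t u); lra).
    assert (s < u) by (pose proof (Rmin_r t u); lra).
    rewrite (Rabs_right (t - s)) by lra. rewrite (Rabs_left1 (s - u)) by lra.
    destruct (Rmin_cases t u) as [[Hm1 Hm2]|[Hm1 Hm2]]; rewrite Hm1 in *.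
    + rewrite (Rabs_left1 (t - u)) by lra.
      assert (s * d x z <= s * (d x y + d y z)) by (apply Rmult_le_compat_l; lra).
      assert ((t - s) * d x z <= (t - s) * 1) by (apply Rmult_le_compat_l; lra). nra.
    + rewrite (Rabs_right (t - u)) by lra.
      assert (s * d x z <= s * (d x y + d y z)) by (apply Rmult_le_compat_l; lra).
      assert ((u - s) * d x z <= (u - s) * 1) by (apply Rmult_le_compat_l; lra). nra.
Qed.

Lemma D_neg_ge p q : 0 <= snd p -> snd q < 0 -> snd p <= D p q.
Proof. destruct p as [x t], q as [y s]; unfold cone_dist; simpl; intros.
  rewrite Rmin_right by lra. rewrite Rabs_right by lra.
  pose proof (Hdiam x y). pose proof (dpos x y).
  assert (s * 1 <= s * d x y) by (apply Rmult_le_compat_neg_l; lra). lra. Qed.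

Lemma D_lev0 x t y : 0 <= t -> D (x,t) (y,0) = t.
Proof. intros. unfold cone_dist; simpl. rewrite Rmin_right by lra.
  rewrite Rabs_right by lra. ring. Qed.

Lemma D_le_sum x t y s : 0 <= t <= 1 -> 0 <= s <= 1 -> D (x,t) (y,s) <= d x y + Rabs (t - s).
Proof. intros. unfold cone_dist; simpl.
  assert (Rmin t s * d x y <= 1 * d x y).
  { apply Rmult_le_compat_r. apply dpos. pose proof (Rmin_l t s); lra. } lra. Qed.

Lemma D_le_max x t y s : 0 <= t <= 1 -> 0 <= s <= 1 -> D (x,t) (y,s) <= Rmax t s.
Proof. intros. unfold cone_dist; simpl.
  assert (Rmin t s * d x y <= Rmin t s * 1).
  { apply Rmult_le_compat_l. destruct (Rmin_cases t s) as [[-> ?]|[-> ?]]; lra. apply Hdiam. }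
  unfold Rmin, Rmax in *; destruct Rle_dec; [rewrite Rabs_left1|rewrite Rabs_right]; lra. Qed.

Lemma open_pos (W : X * R -> Prop) :
  (forall q, W q -> 0 < snd q /\ exists del, 0 < del /\
      forall q', 0 <= snd q' -> D q q' < del -> W q') -> mopen D W.
Proof. intros H q Hq. destruct (H q Hq) as [Hp [del [Hd Hw]]].
  exists (Rmin del (snd q)). split. apply Rmin_glb_lt; auto.
  intros q' Hq'. destruct (Rle_lt_dec 0 (snd q')) as [H0|H0].
  - apply Hw; auto. pose proof (Rmin_l del (snd q)); lra.
  - exfalso. pose proof (D_neg_ge q q' (Rlt_le _ _ Hp) H0). pose proof (Rmin_r del (snd q)); lra.
Qed.

Lemma open_low (W : X * R -> Prop) c : 0 < c -> (forall q, snd q < c -> W q) ->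
  (forall q, W q -> 0 <= snd q -> exists del, 0 < del /\
      forall q', 0 <= snd q' -> D q q' < del -> W q') -> mopen D W.
Proof. intros Hc Hlow H q Hq. destruct (Rle_lt_dec 0 (snd q)) as [H0|H0].
  - destruct (H q Hq H0) as [del [Hd Hw]]. exists del; split; auto.
    intros q' Hq'. destruct (Rle_lt_dec 0 (snd q')) as [H1|H1].
    + apply Hw; auto.
    + apply Hlow; lra.
  - exists c. split; auto. intros q' Hq'. destruct (Rle_lt_dec 0 (snd q')) as [H1|H1].
    + apply Hlow. rewrite D_sym in Hq'. pose proof (D_neg_ge q' q H1 H0). lra.
    + apply Hlow; lra.
Qed.

End Cone.

Lemma list_max {A} (f : A -> R) (l : list A) : exists M, 0 <= M /\ forall a, In a l -> f a <= M.
Proof. induction l as [|a l [M [HM H]]].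
  - exists 0; split; [lra| intros a []].
  - exists (Rmax M (f a)). split. { eapply Rle_trans; [apply HM| apply Rmax_l]. }
    intros b [<-|Hb]. apply Rmax_r. eapply Rle_trans; [apply H; auto| apply Rmax_l]. Qed.

Lemma list_min_pos {A} (P : A -> Prop) (f : A -> R) (l : list A) :
  (forall a, In a l -> P a -> 0 < f a) -> exists m, 0 < m /\ forall a, In a l -> P a -> m <= f a.
Proof. induction l as [|a l IH]; intros H.
  - exists 1; split; [lra| intros a []].
  - destruct IH as [m [Hm Hl]]. { intros; apply H; simpl; auto. }
    destruct (classic (P a)) as [Pa|Pa].
    + exists (Rmin m (f a)). split. apply Rmin_glb_lt; auto. apply H; simpl; auto.
      intros b [<-|Hb] Pb. apply Rmin_r. eapply Rle_trans; [apply Rmin_l| apply Hl; auto].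
    + exists m. split; auto. intros b [<-|Hb] Pb; [contradiction| auto]. Qed.

Lemma interval_cover (rho : R -> R) : (forall s, 0 <= s <= 1 -> 0 < rho s) ->
  exists S, (forall s, In s S -> 0 <= s <= 1) /\
    forall z, 0 <= z <= 1 -> exists s, In s S /\ Rabs (z - s) < rho s.
Proof. intros Hr.
  assert (Hc : forall s, (exists z, (fun s z => 0 <= s <= 1 /\ Rabs (z - s) < rho s) s z) -> 0 <= s <= 1).
  { intros s [z [H _]]; auto. }
  pose (F := mkfamily (fun s => 0 <= s <= 1) (fun s z => 0 <= s <= 1 /\ Rabs (z - s) < rho s) Hc).
  destruct (compact_P3 0 1 F) as [D' [Hcov [l Hl]]].
  - split.
    + intros z Hz. exists z. simpl. split; auto. replace (z - z) with 0 by ring.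
      rewrite Rabs_R0; apply Hr; auto.
    + intros s z [Hs Hz]. assert (Hp : 0 < rho s - Rabs (z - s)) by lra.
      exists (mkposreal _ Hp). intros y Hy. unfold disc in Hy; simpl in Hy. split; auto.
      replace (y - s) with ((y - z) + (z - s)) by ring.
      pose proof (Rabs_triang (y - z) (z - s)). lra.
  - exists l. split.
    + intros s Hs. apply Hl in Hs. destruct Hs as [Hs _]. exact Hs.
    + intros z Hz. destruct (Hcov z Hz) as [s [[Hs Hzs] HD]]. exists s. split; auto.
      apply Hl. split; auto.
Qed.

Section Comp.
Variable X : Type.
Variable d : X -> X -> R.
Hypothesis Hm : is_metric d.
Hypothesis Hcompact : mcompact_space d.
Hypothesis Hdiam : forall x y, d x y <= 1.
Notation D := (cone_dist d).

Lemma ball_open x r : mopen d (fun y => d x y < r).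
Proof. intros y Hy. exists (r - d x y). split. lra. intros q Hq.
  pose proof (dtri _ _ Hm x y q). lra. Qed.

Lemma cont_bounded (f : X -> R) : mcont d f -> exists M, 0 <= M /\ forall x, Rabs (f x) <= M.
Proof. intros Hf.
  destruct (Hcompact nat (fun n y => Rabs (f y) < INR n)) as [l Hl].
  - intros n y Hy. destruct (Hf y (INR n - Rabs (f y))) as [del [Hd Hdel]]. lra.
    exists del. split; auto. intros q Hq. specialize (Hdel q Hq).
    pose proof (Rabs_triang_inv (f q) (f y)). rewrite Rabs_minus_sym in Hdel. lra.
  - intros y _. destruct (INR_unbounded (Rabs (f y))) as [n Hn]. exists n; lra.
  - destruct (list_max INR l) as [M [HM HMl]]. exists M. split; auto.
    intros x. destruct (Hl x I) as [n [Hn Hx]]. specialize (HMl n Hn). lra.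
Qed.

Lemma unif_cont (f : X -> R) : mcont d f -> forall eps, 0 < eps ->
  exists del, 0 < del /\ forall y z, d y z < del -> Rabs (f y - f z) < eps.
Proof. intros Hf eps He.
  destruct (Hcompact (X * R)%type (fun p y => 0 < snd p /\
     (forall z, d (fst p) z < snd p -> Rabs (f (fst p) - f z) < eps / 2) /\ d (fst p) y < snd p / 2)) as [l Hl].
  - intros [x r] y [H1 [H2 H3]]. simpl in *. exists (r/2 - d x y). split. lra.
    intros q Hq. split; auto. split; auto. pose proof (dtri _ _ Hm x y q). simpl. lra.
  - intros y _. destruct (Hf y (eps/2)) as [del [Hd Hdel]]. lra.
    exists (y, del). simpl. split; auto. split; auto. rewrite (dself _ _ Hm). lra.
  - destruct (list_min_pos (fun p => 0 < snd p) (fun p => snd p / 2) l) as [m [Hm0 Hml]].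
    { intros a _ Ha; lra. }
    exists m. split; auto. intros y z Hyz.
    destruct (Hl y I) as [[x r] [Hin [H1 [H2 H3]]]]. simpl in *.
    specialize (Hml _ Hin H1). simpl in Hml.
    pose proof (dtri _ _ Hm x y z).
    assert (A1 := H2 y ltac:(lra)). assert (A2 := H2 z ltac:(lra)).
    replace (f y - f z) with (- (f x - f y) + (f x - f z)) by ring.
    pose proof (Rabs_triang (- (f x - f y)) (f x - f z)) as HT. rewrite Rabs_Ropp in HT. lra.
Qed.

Lemma Lev_compact : mcompact_set D (fun q => 0 <= snd q <= 1).
Proof. intros Ix U HU Hcov.
  assert (Hloc : forall s, 0 <= s <= 1 -> exists p : (R * list Ix)%type, 0 < fst p /\
     forall y u, 0 <= u <= 1 -> Rabs (u - s) < fst p -> exists i, In i (snd p) /\ U i (y, u)).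
  { intros s Hs.
    destruct (Hcompact (X * R * Ix)%type (fun p y => 0 < snd (fst p) /\
       (forall q, D (fst (fst p), s) q < snd (fst p) -> U (snd p) q) /\ d (fst (fst p)) y < snd (fst p) / 2))
      as [l Hl].
    - intros [[x r] i] y [H1 [H2 H3]]. simpl in *. exists (r/2 - d x y). split. lra.
      intros q Hq. split; auto. split; auto. pose proof (dtri _ _ Hm x y q). simpl. lra.
    - intros y _. destruct (Hcov (y, s) Hs) as [i Hi]. destruct (HU i _ Hi) as [r [Hr Hri]].
      exists (y, r, i). simpl. split; auto. split; auto. rewrite (dself _ _ Hm). lra.
    - destruct (list_min_pos (fun p => 0 < snd (fst p)) (fun p => snd (fst p) / 2) l) as [m [Hm0 Hml]].
      { intros a _ Ha; lra. }
      exists (m, map snd l). simpl. split; auto. intros y u Hu Hus.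
      destruct (Hl y I) as [[[x r] i] [Hin [H1 [H2 H3]]]]. simpl in *.
      specialize (Hml _ Hin H1). simpl in Hml. exists i. split.
      + apply in_map_iff. exists (x, r, i); auto.
      + apply H2. pose proof (D_le_sum _ _ Hm x s y u Hs Hu).
        rewrite Rabs_minus_sym in Hus. lra. }
  pose (ch := fun s => epsilon (inhabits (1, @nil Ix)) (fun p : (R * list Ix)%type => 0 < fst p /\
     forall y u, 0 <= u <= 1 -> Rabs (u - s) < fst p -> exists i, In i (snd p) /\ U i (y, u))).
  assert (Hch : forall s, 0 <= s <= 1 -> 0 < fst (ch s) /\
     forall y u, 0 <= u <= 1 -> Rabs (u - s) < fst (ch s) -> exists i, In i (snd (ch s)) /\ U i (y, u)).
  { intros s Hs. unfold ch. apply epsilon_spec. apply Hloc; auto. }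
  destruct (interval_cover (fun s => fst (ch s))) as [S [HS1 HS2]].
  { intros s Hs; apply Hch; auto. }
  exists (flat_map (fun s => snd (ch s)) S). intros [y u] Hu. simpl in Hu.
  destruct (HS2 u Hu) as [s [Hs Hus]].
  destruct (proj2 (Hch s (HS1 s Hs)) y u Hu Hus) as [i [Hi Hui]].
  exists i. split; auto. apply in_flat_map. exists s; auto.
Qed.

End Comp.

Section CSets.
Variable X : Type.
Variable d : X -> X -> R.
Hypothesis Hm : is_metric d.
Hypothesis Hcompact : mcompact_space d.
Hypothesis Hdiam : forall x y, d x y <= 1.
Notation D := (cone_dist d).
Notation Lev := (fun q : (X * R)%type => 0 <= snd q <= 1).

Lemma open_union (W1 W2 : X * R -> Prop) : mopen D W1 -> mopen D W2 -> mopen D (fun q => W1 q \/ W2 q).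
Proof. intros H1 H2 q [Hq|Hq].
  - destruct (H1 q Hq) as [r [Hr Hw]]. exists r; split; auto.
  - destruct (H2 q Hq) as [r [Hr Hw]]. exists r; split; auto. Qed.

Lemma open_ball_pos (p : X * R) r : 0 <= snd p ->
  mopen D (fun q => 0 < snd q /\ D p q < r).
Proof. intros Hp. apply open_pos; auto. intros q [Hq1 Hq2]. split; auto.
  exists (Rmin (r - D p q) (snd q)). split. apply Rmin_glb_lt; lra.
  intros q' Hq' Hqq. pose proof (Rmin_l (r - D p q) (snd q)). pose proof (Rmin_r (r - D p q) (snd q)).
  pose proof (D_lev _ _ Hm q q' ltac:(lra) Hq'). pose proof (D_tri _ _ Hm Hdiam p q q' Hp ltac:(lra) Hq').
  split. apply absle in H1. lra. lra. Qed.

Lemma open_far_pos (p : X * R) r : 0 <= snd p ->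
  mopen D (fun q => 0 < snd q /\ r < D p q).
Proof. intros Hp. apply open_pos; auto. intros q [Hq1 Hq2]. split; auto.
  exists (Rmin (D p q - r) (snd q)). split. apply Rmin_glb_lt; lra.
  intros q' Hq' Hqq. pose proof (Rmin_l (D p q - r) (snd q)). pose proof (Rmin_r (D p q - r) (snd q)).
  pose proof (D_lev _ _ Hm q q' ltac:(lra) Hq'). pose proof (D_tri _ _ Hm Hdiam p q' q Hp Hq' ltac:(lra)).
  rewrite (D_sym _ _ Hm q' q) in H2.
  split. apply absle in H1. lra. lra. Qed.

Lemma open_lowstrip c : 0 < c -> mopen D (fun q => snd q < c).
Proof. intros Hc. apply (open_low _ _ Hm Hdiam) with c; auto.
  intros q Hq Hq0. exists (c - snd q). split. lra. intros q' Hq' Hqq.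
  pose proof (D_lev _ _ Hm q q' Hq0 Hq'). apply absle in H. lra. Qed.

Lemma net (K : X * R -> Prop) r : mcompact_set D K -> (forall q, K q -> Lev q) -> 0 < r ->
  exists l, (forall p, In p l -> K p) /\ forall k, K k -> exists p, In p l /\ D p k < r.
Proof. intros HK HKL Hr.
  pose (U := fun (o : option (X * R)) q => match o with
     | Some p => K p /\ (0 < snd q /\ D p q < r) | None => snd q < r / 2 end).
  destruct (HK _ U) as [L HL].
  - intros [p|]; simpl.
    + destruct (classic (K p)) as [Kp|Kp].
      * intros q [_ Hq]. destruct (open_ball_pos p r (proj1 (HKL p Kp)) q Hq) as [del [Hd Hdel]].
        exists del; split; auto. intros q' Hq'; split; auto.
      * intros q [Hq _]; contradiction.
    + apply open_lowstrip; lra.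
  - intros k Hk. destruct (Rlt_or_le 0 (snd k)) as [H|H].
    + exists (Some k). simpl. rewrite (D_self _ _ Hm). auto.
    + exists None. simpl. pose proof (HKL k Hk). lra.
  - assert (Hgen : forall L0, exists l, (forall p, In p l -> K p) /\ forall k, K k ->
       (exists o, In o L0 /\ U o k) -> exists p, In p l /\ D p k < r).
    { induction L0 as [|o L0 [l [Hl1 Hl2]]].
      - exists nil. split. intros p []. intros k _ [o [[] _]].
      - destruct o as [p|].
        + destruct (classic (K p)) as [Kp|Kp].
          * exists (p :: l). split.
            -- intros p' [<-|Hp']; auto.
            -- intros k Hk [o [[<-|Ho] Hko]].
               ++ exists p. simpl in Hko. split; [left; auto| tauto].
               ++ destruct (Hl2 k Hk (ex_intro _ o (conj Ho Hko))) as [p' [Hp' Hd]].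
                  exists p'; split; [right|]; auto.
          * exists l. split; auto. intros k Hk [o [[<-|Ho] Hko]].
            -- simpl in Hko; tauto.
            -- apply Hl2; eauto.
        + destruct (classic (exists k0, K k0 /\ snd k0 < r / 2)) as [[k0 [Hk0 Hk0r]]|Hn].
          * exists (k0 :: l). split.
            -- intros p' [<-|Hp']; auto.
            -- intros k Hk [o [[<-|Ho] Hko]].
               ++ exists k0. split; [left; auto|]. simpl in Hko. destruct k0 as [x0 t0], k as [y s].
                  pose proof (HKL _ Hk0). pose proof (HKL _ Hk). simpl in *.
                  pose proof (D_le_max _ _ Hdiam x0 t0 y s H H0).
                  unfold Rmax in H1; destruct Rle_dec; lra.
               ++ destruct (Hl2 k Hk (ex_intro _ o (conj Ho Hko))) as [p' [Hp' Hd]].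
                  exists p'; split; [right|]; auto.
          * exists l. split; auto. intros k Hk [o [[<-|Ho] Hko]].
            -- simpl in Hko. exfalso; apply Hn; eauto.
            -- apply Hl2; eauto. }
    destruct (Hgen L) as [l [Hl1 Hl2]]. exists l. split; [auto|].
    intros k Hk. apply Hl2; [auto|]. destruct (HL k Hk) as [o [Ho Hko]]. eauto.
Qed.


Lemma posdist (K : X * R -> Prop) p : mcompact_set D K -> (forall q, K q -> Lev q) ->
  0 < snd p -> (forall k, K k -> 0 < D p k) -> exists rho, 0 < rho /\ forall k, K k -> rho <= D p k.
Proof. intros HK HKL Hp Hpos.
  pose (U := fun (o : option nat) q => match o with
     | Some n => 0 < snd q /\ / (INR n + 1) < D p q | None => snd q < snd p / 2 end).
  destruct (HK _ U) as [L HL].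
  - intros [n|]; simpl.
    + apply open_far_pos; lra.
    + apply open_lowstrip; lra.
  - intros k Hk. destruct (Rlt_or_le (snd k) (snd p / 2)) as [H|H].
    + exists None. simpl; auto.
    + specialize (Hpos k Hk). destruct (INR_unbounded (/ D p k)) as [n Hn].
      exists (Some n). simpl. split. lra.
      pose proof (pos_INR n). assert (Hi : 0 < / D p k) by (apply Rinv_0_lt_compat; auto).
      assert (/ (INR n + 1) < / / D p k). { apply Rinv_lt_contravar. apply Rmult_lt_0_compat; lra. lra. }
      rewrite Rinv_inv in H1. exact H1.
  - assert (Hgen : forall L0, exists rho, 0 < rho /\ forall k, K k ->
       (exists o, In o L0 /\ U o k) -> rho <= D p k).
    { induction L0 as [|o L0 [rho [Hrho Hl]]].
      - exists 1. split. lra. intros k _ [o [[] _]].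
      - destruct o as [n|].
        + exists (Rmin rho (/ (INR n + 1))). split.
          { apply Rmin_glb_lt; auto. apply Rinv_0_lt_compat. pose proof (pos_INR n); lra. }
          intros k Hk [o [[<-|Ho] Hko]].
          * simpl in Hko. pose proof (Rmin_r rho (/ (INR n + 1))). lra.
          * pose proof (Rmin_l rho (/ (INR n + 1))). pose proof (Hl k Hk (ex_intro _ o (conj Ho Hko))). lra.
        + exists (Rmin rho (snd p / 2)). split. apply Rmin_glb_lt; lra.
          intros k Hk [o [[<-|Ho] Hko]].
          * simpl in Hko. pose proof (Rmin_r rho (snd p / 2)).
            pose proof (D_lev _ _ Hm p k ltac:(lra) (proj1 (HKL k Hk))). apply absle in H0. lra.
          * pose proof (Rmin_l rho (snd p / 2)). pose proof (Hl k Hk (ex_intro _ o (conj Ho Hko))). lra. }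
    destruct (Hgen L) as [rho [Hr Hl]]. exists rho. split; [auto|].
    intros k Hk. apply Hl; [auto|]. destruct (HL k Hk) as [o [Ho Hko]]. eauto.
Qed.

Lemma closed_sub (K : X * R -> Prop) : (forall q, K q -> Lev q) ->
  (forall p, Lev p -> ~ K p -> exists r, 0 < r /\ forall k, K k -> r <= D p k) ->
  ((forall x, K (x, 0)) \/ (forall x, ~ K (x, 0))) -> mcompact_set D K.
Proof. intros HKL Hcl H0 Ix U HU Hcov.
  destruct (classic (exists x0 : X, True)) as [[x0 _]|HX].
  2: { exists nil. intros [x t] _. exfalso; apply HX; eauto. }
  assert (Hc : exists c, 0 < c /\ ((forall x, K (x, 0)) \/ forall k, K k -> c <= snd k)).
  { destruct H0 as [H0|H0]. exists 1; split; [lra| left; auto].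
    destruct (Hcl (x0, 0)) as [r [Hr Hk]]. simpl; lra. apply H0.
    exists r. split; auto. right. intros k Hk'. specialize (Hk k Hk'). rewrite D_sym in Hk by auto.
    destruct k as [y s]. rewrite D_lev0 in Hk; auto. apply (HKL _ Hk'). }
  destruct Hc as [c [Hc Hcase]].
  pose (W := fun q : X * R => (0 < snd q /\ exists r, 0 < r /\ forall k, K k -> r <= D q k) \/
       ((forall k, K k -> c <= snd k) /\ snd q < c)).
  pose (V := fun (o : option Ix) q => match o with Some i => U i q | None => W q end).
  destruct (Lev_compact _ _ Hm Hcompact (option Ix) V) as [L HL].
  - intros [i|]; simpl. apply HU.
    apply open_union.
    + apply open_pos; auto. intros q [Hq [r [Hr Hk]]]. split; auto.
      exists (Rmin (r/2) (snd q)). split. apply Rmin_glb_lt; lra.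
      intros q' Hq' Hqq. pose proof (Rmin_l (r/2) (snd q)). pose proof (Rmin_r (r/2) (snd q)).
      pose proof (D_lev _ _ Hm q q' ltac:(lra) Hq') as HL1. apply absle in HL1.
      split. lra. exists (r/2). split. lra. intros k Hk'.
      pose proof (D_tri _ _ Hm Hdiam q q' k ltac:(lra) Hq' (proj1 (HKL k Hk'))). pose proof (Hk k Hk'). lra.
    + destruct (classic (forall k, K k -> c <= snd k)) as [Hall|Hn].
      * intros q [_ Hq]. destruct (open_lowstrip c Hc q Hq) as [r [Hr Hrr]].
        exists r. split; auto.
      * intros q [Hq _]; contradiction.
  - intros p Hp. destruct (classic (K p)) as [Kp|Kp].
    + destruct (Hcov p Kp) as [i Hi]. exists (Some i). exact Hi.
    + exists None. simpl. unfold W. destruct (Rlt_or_le 0 (snd p)) as [Hs|Hs].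
      * left. split; auto.
      * right. destruct Hcase as [Hall|Hall].
        -- exfalso. destruct p as [x t]. simpl in *. assert (t = 0) by lra. subst. apply Kp, Hall.
        -- split; auto. lra.
  - exists (flat_map (fun o => match o with Some i => i :: nil | None => nil end) L).
    intros k Hk. destruct (HL k (HKL k Hk)) as [[i|] [Ho Hko]].
    + exists i. split; auto. apply in_flat_map. exists (Some i). simpl; auto.
    + exfalso. simpl in Hko. destruct Hko as [[_ [r [Hr Hkk]]]|[Hall Hs]].
      * specialize (Hkk k Hk). rewrite D_self in Hkk by auto. lra.
      * specialize (Hall k Hk). lra.
Qed.

End CSets.

Lemma ln_le0 t : 0 < t <= 1 -> ln t <= 0.
Proof. intros Ht. destruct (Req_dec t 1) as [->|Hn]. rewrite ln_1; lra.
  rewrite <- ln_1. left. apply ln_increasing; lra. Qed.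

Lemma ln_ineq y : 0 < y -> ln y <= y - 1.
Proof. intros Hy. pose proof (exp_ineq1_le (ln y)). rewrite exp_ln in H; lra. Qed.

Lemma ln_diff s t : 0 < s -> 0 < t -> ln s - ln t <= (s - t) / t.
Proof. intros Hs Ht. pose proof (ln_ineq (s / t) ltac:(apply Rdiv_lt_0_compat; auto)).
  unfold Rdiv in *. rewrite ln_mult in H; auto. rewrite ln_Rinv in H; auto.
  replace ((s - t) * / t) with (s * / t - 1). lra. field. lra. apply Rinv_0_lt_compat; auto. Qed.

Lemma ln_mono s t : 0 < s -> s <= t -> ln s <= ln t.
Proof. intros Hs Hst. destruct (Req_dec s t) as [->|Hn]. lra. left; apply ln_increasing; lra. Qed.

Section G.
Variable X : Type.
Variable d : X -> X -> R.
Hypothesis Hm : is_metric d.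
Hypothesis Hcompact : mcompact_space d.
Hypothesis Hdiam : forall x y, d x y <= 1.
Notation D := (cone_dist d).

Lemma mcont_const c : mcont d (fun _ => c).
Proof. intros x e He. exists 1. split. lra. intros y _. replace (c - c) with 0 by ring.
  rewrite Rabs_R0; auto. Qed.

Lemma mcont_dist x0 : mcont d (fun y => d x0 y).
Proof. intros x e He. exists e. split; auto. intros y Hy. apply abslt_intro.
  pose proof (dtri _ _ Hm x0 x y). pose proof (dtri _ _ Hm x0 y x). rewrite (dsym _ _ Hm y x) in H0. lra. Qed.

Lemma mcont_affine f a b : mcont d f -> mcont d (fun y => a * f y + b).
Proof. intros Hf x e He. destruct (Hf x (e / (Rabs a + 1))) as [del [Hd Hdel]].
  { apply Rdiv_lt_0_compat; auto. pose proof (Rabs_pos a); lra. }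
  exists del. split; auto. intros y Hy. specialize (Hdel y Hy).
  replace (a * f x + b - (a * f y + b)) with (a * (f x - f y)) by ring.
  rewrite Rabs_mult. pose proof (Rabs_pos a). pose proof (Rabs_pos (f x - f y)).
  assert (Rabs (f x - f y) * (Rabs a + 1) < e).
  { apply Rmult_lt_reg_r with (/ (Rabs a + 1)). apply Rinv_0_lt_compat; lra.
    rewrite Rmult_assoc, Rinv_r by lra. rewrite Rmult_1_r. exact Hdel. }
  nra. Qed.

Lemma mcont_plus_const f b : mcont d f -> mcont d (fun y => b + f y).
Proof. intros Hf. pose proof (mcont_affine f 1 b Hf). intros x e He.
  destruct (H x e He) as [del [Hd Hdel]]. exists del; split; auto. intros y Hy.
  specialize (Hdel y Hy). replace (b + f x - (b + f y)) with (1 * f x + b - (1 * f y + b)) by ring. auto. Qed.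

Lemma mcont_max f g : mcont d f -> mcont d g -> mcont d (fun y => Rmax (f y) (g y)).
Proof. intros Hf Hg x e He. destruct (Hf x e He) as [d1 [Hd1 H1]]. destruct (Hg x e He) as [d2 [Hd2 H2]].
  exists (Rmin d1 d2). split. apply Rmin_glb_lt; auto. intros y Hy.
  pose proof (Rmin_l d1 d2). pose proof (Rmin_r d1 d2).
  specialize (H1 y ltac:(lra)). specialize (H2 y ltac:(lra)).
  apply Rabs_def2 in H1. apply Rabs_def2 in H2. apply abslt_intro.
  unfold Rmax; repeat destruct Rle_dec; lra. Qed.

Definition SA (A : X * R -> Prop) (phi : Cfun d) :=
  fun r => exists x t, A (x, t) /\ 0 < t /\ r = cval phi x + ln t.

Lemma Jbar_lev A q : Jbar d A -> A q -> 0 <= snd q <= 1.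
Proof. intros [H _] Hq. destruct q as [x t]; simpl; exact (H x t Hq). Qed.

Lemma Jbar_zero A y : Jbar d A -> A (y, 0).
Proof. intros (H1 & H2 & _ & _ & H5 & [x1 Hx1]). apply (H2 x1). apply (H5 x1 1); auto; lra. Qed.

Lemma cfun_bounded (phi : Cfun d) : exists M, 0 <= M /\ forall x, Rabs (cval phi x) <= M.
Proof. apply (cont_bounded X d Hcompact). destruct phi; auto. Qed.

Lemma SA_bound A phi : Jbar d A -> bound (SA A phi).
Proof. intros HA. destruct (cfun_bounded phi) as [M [HM HMx]]. exists M.
  intros r [x [t [Hx [Ht ->]]]]. pose proof (Jbar_lev A _ HA Hx). simpl in H.
  pose proof (ln_le0 t ltac:(lra)). pose proof (HMx x). apply absle in H1. lra. Qed.

Lemma SA_ne A phi : Jbar d A -> exists r, SA A phi r.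
Proof. intros HA. destruct HA as (_ & _ & _ & _ & _ & [x1 Hx1]).
  exists (cval phi x1 + ln 1). exists x1, 1. repeat split; auto; lra. Qed.

Lemma gX_upper A phi x t : Jbar d A -> A (x, t) -> 0 < t -> cval phi x + ln t <= gX d A phi.
Proof. intros HA Hx Ht. apply Rsup_upper. apply SA_bound; auto. exists x, t; auto. Qed.

Lemma gX_least A phi c : Jbar d A -> (forall x t, A (x, t) -> 0 < t -> cval phi x + ln t <= c) ->
  gX d A phi <= c.
Proof. intros HA H. apply Rsup_least. intros r [x [t [Hx [Ht ->]]]]. auto. apply SA_ne; auto. Qed.

Lemma gX_gt A phi c : Jbar d A -> c < gX d A phi ->
  exists x t, A (x, t) /\ 0 < t /\ c < cval phi x + ln t.
Proof. intros HA Hc. destruct (Rsup_gt (SA A phi) c (SA_bound A phi HA) (SA_ne A phi HA) Hc)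
  as [r [[x [t [Hx [Ht ->]]]] Hr]]. eauto. Qed.

Lemma gX_maxplus A : Jbar d A -> is_maxplus d (gX d A).
Proof. intros HA. pose proof HA as (_ & _ & _ & _ & _ & [x1 Hx1]). split; [|split].
  - intros c phi Hc. apply Rle_antisym.
    + apply gX_least; auto. intros x t Hx Ht. rewrite Hc.
      pose proof (ln_le0 t). pose proof (Jbar_lev A _ HA Hx). simpl in *. specialize (H ltac:(lra)). lra.
    + pose proof (gX_upper A phi x1 1 HA Hx1 ltac:(lra)). rewrite Hc, ln_1 in H. lra.
  - intros phi psi chi Hc. apply Rle_antisym.
    + apply gX_least; auto. intros x t Hx Ht. rewrite Hc.
      pose proof (gX_upper A phi x t HA Hx Ht). pose proof (gX_upper A psi x t HA Hx Ht).
      unfold Rmax; repeat destruct Rle_dec; lra.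
    + apply Rmax_lub.
      * apply gX_least; auto. intros x t Hx Ht. pose proof (gX_upper A chi x t HA Hx Ht).
        rewrite Hc in H. pose proof (Rmax_l (cval phi x) (cval psi x)). lra.
      * apply gX_least; auto. intros x t Hx Ht. pose proof (gX_upper A chi x t HA Hx Ht).
        rewrite Hc in H. pose proof (Rmax_r (cval phi x) (cval psi x)). lra.
  - intros c phi chi Hc. apply Rle_antisym.
    + apply gX_least; auto. intros x t Hx Ht. rewrite Hc.
      pose proof (gX_upper A phi x t HA Hx Ht). lra.
    + assert (gX d A phi <= gX d A chi - c). 
      { apply gX_least; auto. intros x t Hx Ht. pose proof (gX_upper A chi x t HA Hx Ht).
        rewrite Hc in H. lra. }
      lra.
Qed.

End G.

Section Inj.
Variable X : Type.
Variable d : X -> X -> R.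
Hypothesis Hm : is_metric d.
Hypothesis Hcompact : mcompact_space d.
Hypothesis Hdiam : forall x y, d x y <= 1.
Notation D := (cone_dist d).

Definition bump (x : X) (K : R) : Cfun d :=
  exist _ (fun y => (- K) * d x y + 0) (mcont_affine X d (fun y => d x y) (- K) 0 (mcont_dist X d Hm x)).

Lemma bump_val x K y : cval (bump x K) y = - K * d x y.
Proof. unfold cval, bump; simpl. ring. Qed.

Lemma D_zero_eq x t y s : 0 < t -> 0 <= s -> D (x, t) (y, s) = 0 -> x = y /\ s = t.
Proof. intros Ht Hs H0. pose proof (D_lev X d Hm (x,t) (y,s) ltac:(simpl; lra) Hs). simpl in H.
  rewrite H0 in H. pose proof (Rabs_pos (t - s)). assert (Rabs (t - s) = 0) by lra.
  assert (s = t). { destruct (Rcase_abs (t - s)) as [Hc|Hc]. rewrite Rabs_left in H2; lra.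
    rewrite Rabs_right in H2; lra. }
  subst s. unfold cone_dist in H0; simpl in H0. rewrite Rmin_left in H0 by lra.
  replace (t - t) with 0 in H0 by ring. rewrite Rabs_R0 in H0.
  split; auto. apply (metric_sep _ Hm). pose proof (dpos X d Hm x y).
  destruct (Rle_lt_dec (d x y) 0). lra. assert (0 < t * d x y) by (apply Rmult_lt_0_compat; auto). lra.
Qed.

Lemma g_inj_sub A B : Jbar d A -> Jbar d B -> gX d A = gX d B -> forall q, A q -> B q.
Proof. intros HA HB Heq [x t] Hq.
  pose proof (Jbar_lev X d A _ HA Hq) as Ht. simpl in Ht.
  destruct (Req_dec t 0) as [->|Ht0]. apply (Jbar_zero X d B); auto.
  assert (Htp : 0 < t) by lra. clear Ht0.
  apply NNPP. intros HnB.
  pose proof HB as (_ & _ & _ & HBc & HBs & _).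
  destruct (posdist X d Hm Hdiam B (x, t) HBc (fun q Hq => Jbar_lev X d B q HB Hq) Htp) as [rho [Hrho Hr]].
  { intros [y s] Hy. pose proof (Jbar_lev X d B _ HB Hy). simpl in H.
    pose proof (D_nonneg X d Hm (x,t) (y,s) ltac:(simpl;lra) ltac:(simpl;lra)).
    destruct H0 as [H0|H0]; auto. symmetry in H0. destruct (D_zero_eq x t y s Htp ltac:(lra) H0).
    subst. contradiction. }
  set (eta := Rmin (rho / 2) 1).
  assert (Heta : 0 < eta) by (apply Rmin_glb_lt; lra).
  set (K := (- ln t + 1) / eta).
  assert (HK : K * eta = - ln t + 1) by (unfold K; field; lra).
  assert (Hlt : 0 <= - ln t) by (pose proof (ln_le0 t ltac:(lra)); lra).
  assert (HK0 : 0 <= K) by (unfold K; apply Rmult_le_pos; [lra| left; apply Rinv_0_lt_compat; auto]).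
  pose (phi := bump x K).
  assert (H1 : ln t <= gX d A phi).
  { pose proof (gX_upper X d Hcompact A phi x t HA Hq Htp). unfold phi in *.
    rewrite bump_val, (dself X d Hm) in H. replace (- K * 0) with 0 in H by ring. lra. }
  assert (H2 : gX d B phi <= ln t - Rmin 1 (rho / 2)).
  { apply gX_least; auto. intros y s Hy Hs. unfold phi; rewrite bump_val.
    pose proof (Jbar_lev X d B _ HB Hy). simpl in H.
    pose proof (Rmin_l 1 (rho/2)). pose proof (Rmin_r 1 (rho/2)).
    pose proof (Rmin_l (rho/2) 1). pose proof (Rmin_r (rho/2) 1). fold eta in H3, H4.
    pose proof (dpos X d Hm x y).
    destruct (Rle_lt_dec eta (d x y)) as [Hd|Hd].
    - assert (K * eta <= K * d x y) by (apply Rmult_le_compat_l; auto).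
      pose proof (ln_le0 s ltac:(lra)). lra.
    - assert (Hst : s < t).
      { destruct (Rlt_le_dec s t) as [Hlt'|Hge]; auto. exfalso.
        assert (B (y, t)) by (apply (HBs y s t); auto; lra).
        specialize (Hr _ H6). unfold cone_dist in Hr; simpl in Hr.
        rewrite Rmin_left in Hr by lra. replace (t - t) with 0 in Hr by ring. rewrite Rabs_R0 in Hr.
        assert (t * d x y <= 1 * d x y) by (apply Rmult_le_compat_r; lra). lra. }
      specialize (Hr _ Hy). unfold cone_dist in Hr; simpl in Hr.
      rewrite Rmin_right in Hr by lra. rewrite Rabs_right in Hr by lra.
      assert (s * d x y <= 1 * d x y) by (apply Rmult_le_compat_r; lra).
      assert (Hts : t - s >= rho / 2) by lra.
      pose proof (ln_diff s t Hs Htp).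
      assert ((s - t) / t <= - (rho / 2)).
      { unfold Rdiv. apply Rmult_le_reg_r with t; auto. rewrite Rmult_assoc, Rinv_l by lra.
        assert (- (rho/2) * t >= - (rho / 2)) by nra. lra. }
      assert (0 <= K * d x y) by (apply Rmult_le_pos; auto). lra. }
  rewrite Heq in H1. pose proof (Rmin_glb_lt 1 (rho/2) 0). lra.
Qed.

Lemma g_inj A B : Jbar d A -> Jbar d B -> gX d A = gX d B -> A = B.
Proof. intros HA HB Heq. apply functional_extensionality. intros q.
  apply propositional_extensionality. split.
  apply g_inj_sub; auto. apply g_inj_sub; auto. Qed.

End Inj.

Section Surj.
Variable X : Type.
Variable d : X -> X -> R.
Hypothesis Hm : is_metric d.
Hypothesis Hcompact : mcompact_space d.
Hypothesis Hdiam : forall x y, d x y <= 1.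
Notation D := (cone_dist d).

Definition cconst (c : R) : Cfun d := exist _ (fun _ => c) (mcont_const X d c).
Definition cshift (c : R) (f : Cfun d) : Cfun d :=
  exist _ (fun y => c + cval f y) (mcont_plus_const X d (cval f) c (proj2_sig f)).
Definition cmax (f g : Cfun d) : Cfun d :=
  exist _ (fun y => Rmax (cval f y) (cval g y)) (mcont_max X d (cval f) (cval g) (proj2_sig f) (proj2_sig g)).

Lemma open_lt (f g : X -> R) : mcont d f -> mcont d g -> mopen d (fun y => f y < g y).
Proof. intros Hf Hg y Hy. destruct (Hf y ((g y - f y)/2)) as [d1 [Hd1 H1]]. lra.
  destruct (Hg y ((g y - f y)/2)) as [d2 [Hd2 H2]]. lra.
  exists (Rmin d1 d2). split. apply Rmin_glb_lt; auto. intros z Hz.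
  pose proof (Rmin_l d1 d2). pose proof (Rmin_r d1 d2).
  specialize (H1 z ltac:(lra)). specialize (H2 z ltac:(lra)).
  apply Rabs_def2 in H1. apply Rabs_def2 in H2. lra. Qed.

Variable mu : Cfun d -> R.
Hypothesis Hmu : is_maxplus d mu.

Lemma mu_const c : mu (cconst c) = c.
Proof. destruct Hmu as [H _]. apply H. intros; reflexivity. Qed.

Lemma mu_mono f g : (forall x, cval f x <= cval g x) -> mu f <= mu g.
Proof. intros H. destruct Hmu as [_ [H2 _]].
  assert (mu g = Rmax (mu f) (mu g)). { apply H2. intros x. rewrite Rmax_right; auto. }
  rewrite H0. apply Rmax_l. Qed.

Lemma mu_shift c f : mu (cshift c f) = c + mu f.
Proof. destruct Hmu as [_ [_ H3]]. apply H3. intros; reflexivity. Qed.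

Lemma mu_max f g : mu (cmax f g) = Rmax (mu f) (mu g).
Proof. destruct Hmu as [_ [H2 _]]. apply H2. intros; reflexivity. Qed.

Lemma mu_ge c f : (forall x, c <= cval f x) -> c <= mu f.
Proof. intros H. rewrite <- (mu_const c) at 1. apply mu_mono. intros x; apply H. Qed.

Lemma X_inhabited : exists x0 : X, True.
Proof. apply NNPP. intros HX. destruct Hmu as [H _].
  assert (mu (cconst 0) = 0) by (apply H; intros; reflexivity).
  assert (mu (cconst 0) = 1) by (apply H; intros x; exfalso; apply HX; eauto). lra. Qed.

Lemma maxplus_list (l : list (Cfun d)) : exists chi, (forall psi, In psi l -> forall x,
   cval psi x - mu psi <= cval chi x) /\ mu chi <= 0.
Proof. induction l as [|psi l [chi [H1 H2]]].
  - exists (cconst 0). split. intros _ []. rewrite mu_const; lra.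
  - exists (cmax (cshift (- mu psi) psi) chi). split.
    + intros psi' [<-|Hin] x; unfold cmax, cshift, cval in *; simpl.
      * eapply Rle_trans; [|apply Rmax_l]. lra.
      * eapply Rle_trans; [|apply Rmax_r]. apply H1; auto.
    + rewrite mu_max, mu_shift. apply Rmax_lub; lra. Qed.

Definition Amu (q : X * R) : Prop :=
  0 <= snd q <= 1 /\ (snd q = 0 \/ forall phi, cval phi (fst q) + ln (snd q) <= mu phi).

Lemma Amu_level1 : exists x, Amu (x, 1).
Proof. apply NNPP. intros Hn.
  assert (Hx : forall x, exists phi, mu phi < cval phi x).
  { intros x. apply NNPP. intros H. apply Hn. exists x. split. simpl; lra. right. simpl.
    intros phi. rewrite ln_1. destruct (Rle_lt_dec (cval phi x) (mu phi)). lra.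
    exfalso; apply H; eauto. }
  destruct (Hcompact (Cfun d * R)%type (fun p y => 0 < snd p /\ snd p < cval (fst p) y - mu (fst p))) as [L HL].
  - intros [phi del] y [H1 H2]. simpl in *.
    assert (Hc : mcont d (fun y => cval phi y - mu phi)).
    { intros x e He. destruct (mcont_plus_const X d (cval phi) (- mu phi) (proj2_sig phi) x e He) as [dd [Hdd Hd]].
      exists dd. split; auto. intros z Hz. specialize (Hd z Hz).
      replace (cval phi x - mu phi - (cval phi z - mu phi)) with (- mu phi + cval phi x - (- mu phi + cval phi z)) by ring. auto. }
    destruct (open_lt (fun _ => del) _ (mcont_const X d del) Hc y H2) as [r [Hr Hrr]].
    exists r. split; [auto|]. intros q Hq. split; [auto|]. apply (Hrr q Hq).
  - intros y _. destruct (Hx y) as [phi Hphi]. exists (phi, (cval phi y - mu phi) / 2). simpl. split; lra.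
  - destruct (maxplus_list (map fst L)) as [chi [H1 H2]].
    destruct (list_min_pos (fun p => 0 < snd p) snd L) as [m [Hm0 Hml]]. { auto. }
    assert (m <= mu chi).
    { apply mu_ge. intros y. destruct (HL y I) as [[phi del] [Hin [Hd1 Hd2]]]. simpl in *.
      specialize (Hml _ Hin Hd1). simpl in Hml.
      assert (In phi (map fst L)) by (apply in_map_iff; exists (phi, del); auto).
      specialize (H1 phi H y). lra. }
    lra.
Qed.

Lemma Amu_compact : mcompact_set D Amu.
Proof. apply (closed_sub X d Hm Hcompact Hdiam).
  - intros q [H _]; auto.
  - intros [x t] Hp Hn. simpl in Hp. unfold Amu in Hn. simpl in Hn.
    assert (Ht : t <> 0) by tauto.
    assert (Hphi : exists phi, mu phi < cval phi x + ln t).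
    { apply NNPP. intros H. apply Hn. split; auto. right. intros phi.
      destruct (Rle_lt_dec (cval phi x + ln t) (mu phi)); auto. exfalso; apply H; eauto. }
    destruct Hphi as [phi Hphi]. set (g := cval phi x + ln t - mu phi).
    assert (Hg : 0 < g) by (unfold g; lra).
    assert (Htp : 0 < t) by lra.
    destruct (proj2_sig phi x (g / 2)) as [del [Hdel Hd]]. lra.
    set (r := Rmin (t / 2) (Rmin (g * t / 4) (t * del / 2))).
    assert (Hr1 : r <= t / 2) by apply Rmin_l.
    assert (Hr2 : r <= g * t / 4) by (eapply Rle_trans; [apply Rmin_r| apply Rmin_l]).
    assert (Hr3 : r <= t * del / 2) by (eapply Rle_trans; [apply Rmin_r| apply Rmin_r]).
    assert (Hr : 0 < r). { unfold r. assert (0 < g * t) by nra. assert (0 < t * del) by nra.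
      repeat apply Rmin_glb_lt; lra. }
    exists r. split; auto. intros [y s] [Hs Hk]. simpl in Hs, Hk.
    destruct (Rle_lt_dec r (D (x, t) (y, s))) as [Hle|Hlt]; auto. exfalso.
    pose proof (D_lev X d Hm (x, t) (y, s) ltac:(simpl; lra) ltac:(simpl; lra)) as Hl. simpl in Hl.
    apply absle in Hl.
    assert (Hsp : t / 2 < s) by lra. assert (Hts : t - s < r) by lra.
    destruct Hk as [Hk|Hk]; [lra|].
    specialize (Hk phi). simpl in Hk.
    unfold cone_dist in Hlt; simpl in Hlt.
    assert (Hmin : t / 2 <= Rmin t s) by (apply Rmin_glb; lra).
    pose proof (dpos X d Hm x y). pose proof (Rabs_pos (t - s)).
    assert (t / 2 * d x y <= Rmin t s * d x y) by (apply Rmult_le_compat_r; auto).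
    assert (Hdxy : d x y < del).
    { assert (t / 2 * d x y < t * del / 2) by lra. nra. }
    specialize (Hd y Hdxy). apply Rabs_def2 in Hd.
    pose proof (ln_diff t s Htp ltac:(lra)).
    assert ((t - s) / s <= g / 2).
    { unfold Rdiv. apply Rmult_le_reg_r with s. lra. rewrite Rmult_assoc, Rinv_l by lra.
      rewrite Rmult_1_r. assert (0 < g * (s - t / 2)) by (apply Rmult_lt_0_compat; lra). lra. }
    unfold g, cval in *. lra.
  - left. intros x. split. simpl; lra. left; reflexivity.
Qed.

Lemma Amu_Jbar : Jbar d Amu.
Proof. destruct X_inhabited as [x0 _]. split; [|split; [|split; [|split; [|split]]]].
  - intros x t [H _]; auto.
  - intros x y _. split. simpl; lra. left; reflexivity.
  - exists (x0, 0). split. simpl; lra. left; reflexivity.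
  - apply Amu_compact.
  - intros x t t' [Ht Hk] Ht'. split. simpl in *; lra. simpl in *.
    destruct (Req_dec t' 0) as [->|Hn]; [left; auto| right].
    destruct Hk as [Hk|Hk]; [lra|]. intros phi. specialize (Hk phi).
    pose proof (ln_mono t' t ltac:(lra) ltac:(lra)). lra.
  - apply Amu_level1.
Qed.

Lemma g_Amu : gX d Amu = mu.
Proof. apply functional_extensionality. intros phi. apply Rle_antisym.
  - apply gX_least. apply Amu_Jbar. intros x t [_ [Hk|Hk]] Ht; simpl in *. lra. apply Hk.
  - apply Rnot_lt_le. intros Hlt. set (L := gX d Amu phi) in *. set (c := mu phi - L).
    assert (Hc : 0 < c) by (unfold c; lra).
    assert (Hx : forall x, exists psi, cval phi x < cval psi x - mu psi + mu phi - c / 2).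
    { intros x. destruct (Rlt_le_dec (cval phi x) (mu phi - c / 2)) as [H|H].
      - exists (cconst 0). rewrite mu_const. simpl. lra.
      - set (t := exp (mu phi - c / 2 - cval phi x)).
        assert (Htp : 0 < t) by apply exp_pos.
        assert (Hln : ln t = mu phi - c / 2 - cval phi x) by (unfold t; apply ln_exp).
        assert (Ht1 : t <= 1). { unfold t. rewrite <- exp_0. destruct (Req_dec (mu phi - c / 2 - cval phi x) 0) as [->|Hn]. lra.
           left. apply exp_increasing. lra. }
        apply NNPP. intros Hn. assert (Amu (x, t)).
        { split. simpl; lra. right. simpl. intros psi.
          destruct (Rle_lt_dec (cval psi x + ln t) (mu psi)); auto. exfalso; apply Hn. exists psi. lra. }
        pose proof (gX_upper X d Hcompact Amu phi x t Amu_Jbar H0 Htp). fold L in H1. unfold c in *. lra. }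
    destruct (Hcompact (Cfun d) (fun psi y => cval phi y < cval psi y - mu psi + mu phi - c / 2)) as [Lst HL].
    + intros psi. apply open_lt. exact (proj2_sig phi).
      intros x e He. destruct (mcont_plus_const X d (cval psi) (- mu psi + mu phi - c / 2) (proj2_sig psi) x e He) as [dd [Hdd Hd]].
      exists dd. split; auto. intros z Hz. specialize (Hd z Hz).
      replace (cval psi x - mu psi + mu phi - c / 2 - (cval psi z - mu psi + mu phi - c / 2)) with
        (- mu psi + mu phi - c / 2 + cval psi x - (- mu psi + mu phi - c / 2 + cval psi z)) by ring. auto.
    + intros y _. apply Hx.
    + destruct (maxplus_list Lst) as [chi [H1 H2]].
      assert (mu phi <= mu (cshift (mu phi - c / 2) chi)).
      { apply mu_mono. intros y. destruct (HL y I) as [psi [Hin Hy]]. specialize (H1 psi Hin y).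
        unfold cshift, cval in *; simpl in *. lra. }
      rewrite mu_shift in H. lra.
Qed.

Lemma g_surj : exists A, Jbar d A /\ gX d A = mu.
Proof. exists Amu. split. apply Amu_Jbar. apply g_Amu. Qed.

End Surj.

Section Haus.
Variable X : Type.
Variable d : X -> X -> R.
Hypothesis Hm : is_metric d.
Hypothesis Hcompact : mcompact_space d.
Hypothesis Hdiam : forall x y, d x y <= 1.
Notation D := (cone_dist d).

Lemma Jlev A q : Jbar d A -> A q -> 0 <= snd q <= 1.
Proof. apply Jbar_lev. Qed.

Lemma psd_le A B a b : Jbar d A -> Jbar d B -> A a -> B b -> pt_set_dist D a B <= D a b.
Proof. intros HA HB Ha Hb. apply Rinf_lower. exists 0. intros z [b' [Hb' ->]].
  apply (D_nonneg X d Hm); [apply (Jlev A a HA Ha)| apply (Jlev B b' HB Hb')]. eauto. Qed.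

Lemma psd_ge B a c : Jbar d B -> (forall b, B b -> c <= D a b) -> c <= pt_set_dist D a B.
Proof. intros HB H. apply Rinf_greatest. intros z [b [Hb ->]]; auto.
  destruct HB as (_ & _ & [b Hb] & _). eauto. Qed.

Lemma psd_le1 A B a : Jbar d A -> Jbar d B -> A a -> pt_set_dist D a B <= 1.
Proof. intros HA HB Ha. destruct a as [x t]. pose proof (Jbar_zero X d B x HB).
  eapply Rle_trans. apply (psd_le A B (x,t) (x,0)); auto.
  rewrite D_lev0 by (pose proof (Jlev A _ HA Ha); simpl in *; lra).
  pose proof (Jlev A _ HA Ha); simpl in *; lra. Qed.

Lemma hd_lt A B rho : Jbar d A -> Jbar d B -> hausdorff D A B < rho ->
  (forall a, A a -> exists b, B b /\ D a b < rho) /\ (forall b, B b -> exists a, A a /\ D b a < rho).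
Proof. intros HA HB Hh. unfold hausdorff in Hh.
  pose proof (Rmax_l (Rsup (fun r => exists a, A a /\ r = pt_set_dist D a B))
                     (Rsup (fun r => exists b, B b /\ r = pt_set_dist D b A))).
  pose proof (Rmax_r (Rsup (fun r => exists a, A a /\ r = pt_set_dist D a B))
                     (Rsup (fun r => exists b, B b /\ r = pt_set_dist D b A))).
  split.
  - intros a Ha. apply NNPP. intros Hn.
    assert (rho <= pt_set_dist D a B).
    { apply psd_ge; auto. intros b Hb. destruct (Rle_lt_dec rho (D a b)); auto. exfalso; apply Hn; eauto. }
    assert (pt_set_dist D a B <= Rsup (fun r => exists a, A a /\ r = pt_set_dist D a B)).
    { apply Rsup_upper. exists 1. intros z [a' [Ha' ->]]. apply psd_le1 with A; auto. eauto. }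
    lra.
  - intros b Hb. apply NNPP. intros Hn.
    assert (rho <= pt_set_dist D b A).
    { apply psd_ge; auto. intros a Ha. destruct (Rle_lt_dec rho (D b a)); auto. exfalso; apply Hn; eauto. }
    assert (pt_set_dist D b A <= Rsup (fun r => exists b, B b /\ r = pt_set_dist D b A)).
    { apply Rsup_upper. exists 1. intros z [b' [Hb' ->]]. apply psd_le1 with B; auto. eauto. }
    lra.
Qed.

Lemma hd_le A B rho : Jbar d A -> Jbar d B -> 0 <= rho ->
  (forall a, A a -> exists b, B b /\ D a b <= rho) -> (forall b, B b -> exists a, A a /\ D b a <= rho) ->
  hausdorff D A B <= rho.
Proof. intros HA HB Hr H1 H2. unfold hausdorff. apply Rmax_lub.
  - apply Rsup_least0; auto. intros z [a [Ha ->]]. destruct (H1 a Ha) as [b [Hb Hab]].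
    pose proof (psd_le A B a b HA HB Ha Hb). lra.
  - apply Rsup_least0; auto. intros z [b [Hb ->]]. destruct (H2 b Hb) as [a [Ha Hab]].
    pose proof (psd_le B A b a HB HA Hb Ha). lra.
Qed.

Lemma g_cont1 A (phi : Cfun d) r : Jbar d A -> 0 < r ->
  exists rho, 0 < rho /\ forall B, Jbar d B -> hausdorff D A B < rho -> Rabs (gX d B phi - gX d A phi) < r.
Proof. intros HA Hr.
  destruct (cfun_bounded X d Hcompact phi) as [M [HM HMx]].
  pose proof HA as (_ & _ & _ & _ & _ & [x1 Hx1]).
  assert (HgA : - M <= gX d A phi).
  { pose proof (gX_upper X d Hcompact A phi x1 1 HA Hx1 ltac:(lra)). rewrite ln_1 in H.
    pose proof (HMx x1). apply absle in H0. lra. }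
  destruct (gX_gt X d Hcompact A phi (gX d A phi - r / 2) HA ltac:(lra)) as [x [t [Hx [Ht Hxt]]]].
  destruct (proj2_sig phi x (r / 4)) as [d1 [Hd1 Hd1']]. lra.
  set (rho1 := Rmin (t / 2) (Rmin (t * d1 / 2) (r * t / 8))).
  assert (Hr1a : rho1 <= t / 2) by apply Rmin_l.
  assert (Hr1b : rho1 <= t * d1 / 2) by (eapply Rle_trans; [apply Rmin_r| apply Rmin_l]).
  assert (Hr1c : rho1 <= r * t / 8) by (eapply Rle_trans; [apply Rmin_r| apply Rmin_r]).
  assert (Hr1 : 0 < rho1). { unfold rho1. assert (0 < t * d1) by nra. assert (0 < r * t) by nra.
      repeat apply Rmin_glb_lt; lra. }
  destruct (unif_cont X d Hm Hcompact (cval phi) (proj2_sig phi) (r / 4)) as [d2 [Hd2 Hd2']]. lra.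
  set (s0 := exp (- (2 * M))).
  assert (Hs0 : 0 < s0) by apply exp_pos.
  set (rho2 := Rmin (s0 / 2) (Rmin (s0 * d2 / 2) (r * s0 / 8))).
  assert (Hr2a : rho2 <= s0 / 2) by apply Rmin_l.
  assert (Hr2b : rho2 <= s0 * d2 / 2) by (eapply Rle_trans; [apply Rmin_r| apply Rmin_l]).
  assert (Hr2c : rho2 <= r * s0 / 8) by (eapply Rle_trans; [apply Rmin_r| apply Rmin_r]).
  assert (Hr2 : 0 < rho2). { unfold rho2. assert (0 < s0 * d2) by nra. assert (0 < r * s0) by nra.
      repeat apply Rmin_glb_lt; lra. }
  exists (Rmin rho1 rho2). split. apply Rmin_glb_lt; auto.
  intros B HB Hh. pose proof (Rmin_l rho1 rho2). pose proof (Rmin_r rho1 rho2).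
  destruct (hd_lt A B _ HA HB Hh) as [HAB HBA].
  assert (Hlow : gX d A phi - r < gX d B phi).
  { destruct (HAB (x, t) Hx) as [[y s] [Hy Hds]].
    pose proof (D_lev X d Hm (x,t) (y,s) ltac:(simpl; lra) ltac:(apply (Jlev B _ HB Hy))) as Hl.
    simpl in Hl. apply absle in Hl.
    assert (Hts : Rabs (t - s) < rho1) by (apply abslt_intro; lra). apply Rabs_def2 in Hts.
    assert (Hsp : t / 2 < s) by lra.
    unfold cone_dist in Hds; simpl in Hds.
    assert (Hmin : t / 2 <= Rmin t s) by (apply Rmin_glb; lra).
    pose proof (dpos X d Hm x y). pose proof (Rabs_pos (t - s)).
    assert (t / 2 * d x y <= Rmin t s * d x y) by (apply Rmult_le_compat_r; auto).
    assert (Hdxy : d x y < d1). { assert (t / 2 * d x y < t * d1 / 2) by lra. nra. }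
    specialize (Hd1' y Hdxy). apply Rabs_def2 in Hd1'.
    pose proof (ln_diff t s Ht ltac:(lra)).
    assert ((t - s) / s <= r / 4).
    { unfold Rdiv. apply Rmult_le_reg_r with s. lra. rewrite Rmult_assoc, Rinv_l by lra.
      rewrite Rmult_1_r. assert (0 < r * (s - t / 2)) by (apply Rmult_lt_0_compat; lra). lra. }
    pose proof (gX_upper X d Hcompact B phi y s HB Hy ltac:(lra)).
    unfold cval in *. lra. }
  assert (Hup : gX d B phi <= gX d A phi + r / 2).
  { apply gX_least; auto. intros y s Hy Hs.
    pose proof (HMx y) as Hy'. apply absle in Hy'.
    destruct (Rle_lt_dec (ln s) (- (2 * M))) as [Hls|Hls]. lra.
    assert (Hss : s0 < s). { rewrite <- (exp_ln s) by auto. apply exp_increasing; auto. }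
    destruct (HBA (y, s) Hy) as [[x' t'] [Hx' Hdt]].
    pose proof (Jlev A _ HA Hx') as Ht'. simpl in Ht'.
    pose proof (D_lev X d Hm (y,s) (x',t') ltac:(simpl; lra) ltac:(simpl; lra)) as Hl.
    simpl in Hl. apply absle in Hl.
    assert (Htp : s0 / 2 < t') by lra. assert (Hst2 : s - t' < rho2) by lra.
    unfold cone_dist in Hdt; simpl in Hdt.
    assert (Hmin : s0 / 2 <= Rmin s t') by (apply Rmin_glb; lra).
    pose proof (dpos X d Hm y x'). pose proof (Rabs_pos (s - t')).
    assert (s0 / 2 * d y x' <= Rmin s t' * d y x') by (apply Rmult_le_compat_r; auto).
    assert (Hdxy : d y x' < d2). { assert (s0 / 2 * d y x' < s0 * d2 / 2) by lra. nra. }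
    specialize (Hd2' y x' Hdxy). apply Rabs_def2 in Hd2'.
    pose proof (ln_diff s t' Hs ltac:(lra)).
    assert ((s - t') / t' <= r / 4).
    { unfold Rdiv. apply Rmult_le_reg_r with t'. lra. rewrite Rmult_assoc, Rinv_l by lra.
      rewrite Rmult_1_r. assert (0 < r * (t' - s0 / 2)) by (apply Rmult_lt_0_compat; lra). lra. }
    pose proof (gX_upper X d Hcompact A phi x' t' HA Hx' ltac:(lra)). lra. }
  apply abslt_intro; lra.
Qed.

Lemma g_cont A (l : list (Cfun d)) r : Jbar d A -> 0 < r ->
  exists rho, 0 < rho /\ forall B, Jbar d B -> hausdorff D A B < rho ->
    forall phi, In phi l -> Rabs (gX d B phi - gX d A phi) < r.
Proof. intros HA Hr. induction l as [|phi l [rho [Hrho IH]]].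
  - exists 1. split. lra. intros B _ _ phi [].
  - destruct (g_cont1 A phi r HA Hr) as [rho' [Hrho' H']].
    exists (Rmin rho rho'). split. apply Rmin_glb_lt; auto.
    intros B HB Hh psi [<-|Hin].
    + apply H'; auto. pose proof (Rmin_r rho rho'); lra.
    + apply IH; auto. pose proof (Rmin_l rho rho'); lra.
Qed.

End Haus.

Section Key.
Variable X : Type.
Variable d : X -> X -> R.
Hypothesis Hm : is_metric d.
Hypothesis Hcompact : mcompact_space d.
Hypothesis Hdiam : forall x y, d x y <= 1.
Notation D := (cone_dist d).

Lemma div_le_neg x s : x <= 0 -> 0 < s <= 1 -> x / s <= x.
Proof. intros Hx Hs. unfold Rdiv. apply Rmult_le_reg_r with s. lra.
  rewrite Rmult_assoc, Rinv_l by lra. nra. Qed.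

Lemma key A eps : Jbar d A -> 0 < eps -> exists l r, 0 < r /\ forall B, Jbar d B ->
   (forall phi, In phi l -> Rabs (gX d B phi - gX d A phi) < r) -> hausdorff D A B < eps.
Proof. intros HA Heps.
  set (e := Rmin eps 1).
  assert (He : 0 < e) by (apply Rmin_glb_lt; lra).
  assert (He1 : e <= 1) by apply Rmin_r.
  assert (Hee : e <= eps) by apply Rmin_l.
  pose proof HA as (_ & _ & _ & HAc & HAs & _).
  assert (HAL : forall q, A q -> 0 <= snd q <= 1) by (intros; apply (Jlev X d A); auto).
  set (L := ln (4 / e)).
  assert (HL0 : 0 <= L). { unfold L. rewrite <- ln_1. apply ln_mono. lra.
     unfold Rdiv. apply Rmult_le_reg_r with e; auto. rewrite Rmult_assoc, Rinv_l by lra. lra. }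
  assert (HLe : ln (e / 4) = - L).
  { unfold L. replace (4 / e) with (/ (e / 4)) by (field; lra). rewrite ln_Rinv; [ring| lra]. }
  destruct (net X d Hm Hdiam A (e / 4) HAc HAL ltac:(lra)) as [N [HN1 HN2]].
  set (K1 := 8 * (L + 1) / e).
  assert (HK1 : K1 * (e / 8) = L + 1) by (unfold K1; field; lra).
  assert (HK1p : 0 < K1) by (unfold K1; apply Rdiv_lt_0_compat; lra).
  set (C := fun q : X * R => 0 <= snd q <= 1 /\ forall a, A a -> e / 2 <= D a q).
  assert (HCc : mcompact_set D C).
  { apply (closed_sub X d Hm Hcompact Hdiam).
    - intros q [Hq _]; auto.
    - intros p Hp Hn. assert (exists a, A a /\ D a p < e / 2).
      { apply NNPP. intros H. apply Hn. split; auto. intros a Ha.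
        destruct (Rle_lt_dec (e / 2) (D a p)); auto. exfalso; apply H; eauto. }
      destruct H as [a [Ha Hap]]. exists (e / 2 - D a p). split. lra.
      intros k [Hk1 Hk2]. specialize (Hk2 a Ha).
      pose proof (D_tri X d Hm Hdiam a p k ltac:(apply HAL; auto) ltac:(lra) ltac:(lra)). lra.
    - right. intros x [_ Hx]. specialize (Hx (x, 0) (Jbar_zero X d A x HA)).
      rewrite D_self in Hx by auto. lra. }
  set (K2 := 4 * L / e).
  assert (HK2 : K2 * (e / 4) = L) by (unfold K2; field; lra).
  assert (HK2p : 0 <= K2) by (unfold K2; apply Rmult_le_pos; [lra| left; apply Rinv_0_lt_compat; lra]).
  set (rho := Rmin (e / 16) (e * e / (64 * (K2 + 1)))).
  assert (Hrho1 : rho <= e / 16) by apply Rmin_l.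
  assert (Hrho2 : rho * (64 * (K2 + 1)) <= e * e).
  { assert (rho <= e * e / (64 * (K2 + 1))) by apply Rmin_r.
    apply Rmult_le_compat_r with (r := 64 * (K2 + 1)) in H; [|lra].
    unfold Rdiv in H. rewrite Rmult_assoc, Rinv_l in H by lra. lra. }
  assert (Hrho : 0 < rho). { apply Rmin_glb_lt. lra. apply Rdiv_lt_0_compat; nra. }
  destruct (net X d Hm Hdiam C rho HCc (fun q Hq => proj1 Hq) Hrho) as [P [HP1 HP2]].
  exists (map (fun a => bump X d Hm (fst a) K1) N ++ map (fun p => bump X d Hm (fst p) K2) P), (e / 16).
  split. lra. intros B HB Hcl.
  pose proof HB as (_ & _ & _ & _ & HBs & _).
  assert (HBL : forall q, B q -> 0 <= snd q <= 1) by (intros; apply (Jlev X d B); auto).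
  assert (Hh : hausdorff D A B <= e / 2).
  { apply (hd_le X d Hm); auto. lra.
    - intros a Ha. destruct (HN2 a Ha) as [[xi ti] [Hai Hda]].
      pose proof (HN1 _ Hai) as HAi. pose proof (HAL _ HAi) as Hti. simpl in Hti.
      assert (Hc : exists b, B b /\ D (xi, ti) b <= e / 4).
      { destruct (Rle_lt_dec ti (e / 4)) as [Hle|Hlt].
        - exists (xi, 0). split. apply (Jbar_zero X d B); auto. rewrite D_lev0; lra.
        - set (phi := bump X d Hm xi K1).
          assert (Hin : In phi (map (fun a => bump X d Hm (fst a) K1) N ++ map (fun p => bump X d Hm (fst p) K2) P)).
          { apply in_or_app. left. apply in_map_iff. exists (xi, ti); auto. }
          specialize (Hcl phi Hin). apply Rabs_def2 in Hcl.
          assert (HgA : ln ti <= gX d A phi).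
          { pose proof (gX_upper X d Hcompact A phi xi ti HA HAi ltac:(lra)). unfold phi in *.
            rewrite bump_val, (dself X d Hm) in H. replace (- K1 * 0) with 0 in H by ring. lra. }
          destruct (gX_gt X d Hcompact B phi (ln ti - e / 16) HB ltac:(lra)) as [y [s [Hy [Hs Hys]]]].
          unfold phi in Hys. rewrite bump_val in Hys.
          pose proof (HBL _ Hy) as Hs1. simpl in Hs1.
          pose proof (ln_le0 s ltac:(lra)).
          assert (Hlt4 : - ln ti < L). { pose proof (ln_increasing (e/4) ti ltac:(lra) Hlt). lra. }
          pose proof (dpos X d Hm xi y).
          assert (0 <= K1 * d xi y) by (apply Rmult_le_pos; lra).
          assert (Hdd : d xi y < e / 8).
          { apply Rmult_lt_reg_l with K1; auto. lra. }
          exists (y, Rmin s ti). split.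
          + apply (HBs y s); auto. split. apply Rmin_glb; lra. apply Rmin_l.
          + unfold cone_dist; simpl. rewrite (Rmin_right ti (Rmin s ti)) by apply Rmin_r.
            assert (Hm1 : Rmin s ti <= 1) by (pose proof (Rmin_r s ti); lra).
            assert (Hm0 : 0 <= Rmin s ti) by (apply Rmin_glb; lra).
            assert (Rmin s ti * d xi y <= 1 * d xi y) by (apply Rmult_le_compat_r; lra).
            assert (Hdiff : ti - Rmin s ti <= e / 16).
            { destruct (Rle_lt_dec ti s) as [Hts|Hts].
              - rewrite Rmin_right by lra. lra.
              - rewrite Rmin_left by lra. pose proof (ln_diff s ti Hs ltac:(lra)).
                assert ((s - ti) / ti * ti = s - ti) by (field; lra).
                assert (- (e/16) < (s - ti) / ti) by lra.
                assert (- (e/16) * ti < (s - ti) / ti * ti) by (apply Rmult_lt_compat_r; lra).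
                nra. }
            rewrite Rabs_right by (pose proof (Rmin_r s ti); lra). lra. }
      destruct Hc as [b [Hb Hdb]]. exists b. split; auto.
      pose proof (D_tri X d Hm Hdiam a (xi, ti) b ltac:(apply HAL; auto) ltac:(simpl; lra) ltac:(apply HBL; auto)).
      rewrite (D_sym X d Hm a (xi,ti)) in H. lra.
    - intros b Hb. destruct (classic (exists a, A a /\ D b a < e / 2)) as [[a [Ha Hab]]|Hn].
      { exists a. split; auto. lra. }
      exfalso. assert (HCb : C b).
      { split. apply HBL; auto. intros a Ha. rewrite D_sym by auto.
        destruct (Rle_lt_dec (e / 2) (D b a)); auto. exfalso; apply Hn; eauto. }
      destruct (HP2 b HCb) as [[y s] [Hp Hpb]].
      pose proof (HP1 _ Hp) as [Hs1 HCp]. simpl in Hs1.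
      destruct b as [y' s']. pose proof (HBL _ Hb) as Hs1'. simpl in Hs1'.
      assert (Hse : e / 2 <= s).
      { specialize (HCp (y, 0) (Jbar_zero X d A y HA)). rewrite D_sym, D_lev0 in HCp by (auto; lra). auto. }
      set (phi := bump X d Hm y K2).
      assert (Hin : In phi (map (fun a => bump X d Hm (fst a) K1) N ++ map (fun p => bump X d Hm (fst p) K2) P)).
      { apply in_or_app. right. apply in_map_iff. exists (y, s); auto. }
      specialize (Hcl phi Hin). apply Rabs_def2 in Hcl.
      assert (HgA : gX d A phi <= ln (s - e / 4)).
      { apply gX_least; auto. intros x t Hx Ht. unfold phi; rewrite bump_val.
        pose proof (HAL _ Hx) as Ht1; simpl in Ht1. pose proof (dpos X d Hm y x).
        destruct (Rle_lt_dec (e / 4) (d y x)) as [Hd|Hd].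
        - assert (K2 * (e / 4) <= K2 * d y x) by (apply Rmult_le_compat_l; lra).
          pose proof (ln_le0 t ltac:(lra)). pose proof (ln_mono (e/4) (s - e/4) ltac:(lra) ltac:(lra)). lra.
        - assert (Hts : t < s).
          { destruct (Rlt_le_dec t s) as [H'|H']; auto. exfalso.
            specialize (HCp (x, s) ltac:(apply (HAs x t s); auto; lra)).
            unfold cone_dist in HCp; simpl in HCp. rewrite Rmin_left in HCp by lra.
            replace (s - s) with 0 in HCp by ring. rewrite Rabs_R0 in HCp.
            rewrite (dsym X d Hm x y) in HCp.
            assert (s * d y x <= 1 * d y x) by (apply Rmult_le_compat_r; lra). lra. }
          specialize (HCp (x, t) Hx). unfold cone_dist in HCp; simpl in HCp.
          rewrite Rmin_left in HCp by lra. rewrite Rabs_left1 in HCp by lra.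
          rewrite (dsym X d Hm x y) in HCp.
          assert (t * d y x <= 1 * d y x) by (apply Rmult_le_compat_r; lra).
          pose proof (ln_mono t (s - e / 4) Ht ltac:(lra)).
          assert (0 <= K2 * d y x) by (apply Rmult_le_pos; lra). lra. }
      pose proof (D_lev X d Hm (y, s) (y', s') ltac:(simpl; lra) ltac:(simpl; lra)) as Hl.
      simpl in Hl. apply absle in Hl.
      assert (Hss : s - s' < rho) by lra.
      assert (Hsp : e / 4 < s') by lra.
      assert (HgB : - K2 * d y y' + ln s' <= gX d B phi).
      { pose proof (gX_upper X d Hcompact B phi y' s' HB Hb ltac:(lra)). unfold phi in *.
        rewrite bump_val in H. lra. }
      unfold cone_dist in Hpb; simpl in Hpb.
      assert (Hmin : e / 4 <= Rmin s s') by (apply Rmin_glb; lra).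
      pose proof (dpos X d Hm y y'). pose proof (Rabs_pos (s - s')).
      assert (e / 4 * d y y' <= Rmin s s' * d y y') by (apply Rmult_le_compat_r; auto).
      assert (Hd1 : e / 4 * d y y' < rho) by lra.
      assert (Hd2 : (K2 + 1) * (e / 4 * d y y') <= (K2 + 1) * rho) by (apply Rmult_le_compat_l; lra).
      assert (Hd3 : (K2 + 1) * d y y' <= e / 16).
      { apply Rmult_le_reg_l with (e / 4). lra. nra. }
      assert (Hd4 : K2 * d y y' <= e / 16) by nra.
      pose proof (ln_diff (s - e / 4) s' ltac:(lra) ltac:(lra)).
      pose proof (div_le_neg (s - e / 4 - s') s' ltac:(lra) ltac:(lra)).
      lra. }
  lra.
Qed.

End Key.

Theorem mainTheorem12 (X : Type) (d : X -> X -> R)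
  (Hmetric : is_metric d) (Hcompact : mcompact_space d)
  (Hdiam : forall x y, d x y <= 1) :
  (forall A, Jbar d A -> is_maxplus d (gX d A)) /\
  homeomorphism (Jbar d) (openJ d) (is_maxplus d) (openI d) (gX d).
Proof.
  assert (HM : forall A, Jbar d A -> is_maxplus d (gX d A)) by (intros; apply gX_maxplus; auto).
  split; auto. split; [|split; [|split; [|split]]].
  - exact HM.
  - intros a b Ha Hb Heq. apply (g_inj X d Hmetric Hcompact Hdiam); auto.
  - intros mu Hmu. destruct (g_surj X d Hmetric Hcompact Hdiam mu Hmu) as [A [HA HgA]]. eauto.
  - intros V HV A HA HVA. destruct (HV (gX d A) (HM A HA) HVA) as [l [r [Hr Hl]]].
    destruct (g_cont X d Hmetric Hcompact A l r HA Hr) as [rho [Hrho Hc]].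
    exists rho. split; [auto|]. intros B HB Hh. apply Hl. apply HM; auto.
    intros phi Hphi. apply (Hc B HB Hh phi Hphi).
  - intros U HU mu Hmu [A [HA [HUA HgA]]]. subst mu.
    destruct (HU A HA HUA) as [eps [Heps HUe]].
    destruct (key X d Hmetric Hcompact Hdiam A eps HA Heps) as [l [r [Hr Hk]]].
    exists l, r. split; [auto|]. intros nu Hnu Hl.
    destruct (g_surj X d Hmetric Hcompact Hdiam nu Hnu) as [B [HB HgB]]. subst nu.
    exists B. split; [auto|]. split; [|auto]. apply HUe; auto.
Qed.
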